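(* Admissible semantics (the map $F\mapsto \mathrm{adm}(F)$, the set of admissible sets of $F$) is serialisable with the selection function $\alpha_{adm}(X,Y,Z)=X\cup Y\cup Z$ and the termination function $\beta_{adm}(F,S)=1$ for all $F,S$.
   Context: An abstract argumentation framework (AF) is a pair $F=(A,R)$ with $A$ a finite subset of a fixed universal set of arguments $\mathfrak{A}$ and $R\subseteq A\times A$ ($a\to b$ means $(a,b)\in R$). For $S\subseteq A$: $S^+=\{a\mid \exists b\in S: b\to a\}$, $S^-=\{a\mid\exists b\in S: a\to b\}$; for sets $S,S'$, $S\to S'$ means $S^+\cap S'\neq\emptyset$. $S$ is conflict-free if no $a,b\in S$ with $a\to b$; $S$ defends $b$ if every attacker of $b$ is attacked by some element of $S$; $S$ is admissible if conflict-free and defends all its elements. An initial set is a non-empty admissible set with no non-empty admissible proper subset; $\mathrm{IS}(F)$ is the set of initial sets. An initial set $S$ is unattacked if $S^-=\emptyset$; unchallenged if $S^-\neq\emptyset$ and no $S'\in\mathrm{IS}(F)$ has $S'\to S$; challenged if some $S'\in\mathrm{IS}(F)$ has $S'\to S$. Write $\mathrm{IS}^{u}(F),\mathrm{IS}^{uc}(F),\mathrm{IS}^{c}(F)$ for the sets of unattacked, unchallenged, challenged initial sets. The reduct is $F^S=(A',R\cap(A'\times A'))$ with $A'=A\setminus(S\cup S^+)$. A selection function $\alpha$ maps any three sets $X,Y,Z$ of sets of arguments to a subset $\alpha(X,Y,Z)\subseteq X\cup Y\cup Z$. A termination function $\beta$ maps pairs $(F,S)$ (AF, set of arguments) to $\{0,1\}$.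 A state is a pair $(F,S)$; there is a transition $(F,S)\to(F^{S'},S\cup S')$ whenever $S'\in\alpha(\mathrm{IS}^u(F),\mathrm{IS}^{uc}(F),\mathrm{IS}^c(F))$. Write $(F,S)\leadsto^{\alpha}(F',S')$ if $(F',S')$ is reachable in finitely many (possibly zero) transitions, and $(F,S)\leadsto^{\alpha,\beta}(F',S')$ if moreover $\beta(F',S')=1$. Let $\mathcal{E}^{\alpha,\beta}(F)$ be the set of all $S$ with $(F,\emptyset)\leadsto^{\alpha,\beta}(F',S)$ for some $F'$. A semantics $\sigma$ (assigning to each AF a set $\sigma(F)$ of sets of arguments) is serialisable with $\alpha,\beta$ if $\sigma(F)=\mathcal{E}^{\alpha,\beta}(F)$ for all AFs $F$. *)

(* Defs.v *)
From mathcomp Require Import all_boot.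
Set Implicit Arguments. Unset Strict Implicit. Unset Printing Implicit Defensive.

Section AFDefs.
Variable T : finType.

Definition AF := ({set T} * {set (T * T)})%type.
Definition args (F : AF) : {set T} := F.1.
Definition att (F : AF) : {set (T * T)} := F.2.
Definition wf_AF (F : AF) : bool := att F \subset setX (args F) (args F).

Definition splus (F : AF) (S : {set T}) : {set T} :=
  [set a | [exists b in S, (b, a) \in att F]].
Definition sminus (F : AF) (S : {set T}) : {set T} :=
  [set a | [exists b in S, (a, b) \in att F]].
Definition set_attacks (F : AF) (S S' : {set T}) : bool :=
  splus F S :&: S' != set0.

Definition conflict_free (F : AF) (S : {set T}) : bool :=
  [forall a in S, forall b in S, (a, b) \notin att F].
Definition defends (F : AF) (S : {set T}) (b : T) : bool :=
  [forall a, ((a, b) \in att F) ==> [exists c in S, (c, a) \in att F]].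
Definition admissible (F : AF) (S : {set T}) : bool :=
  [&& S \subset args F, conflict_free F S & [forall b in S, defends F S b]].

Definition initial (F : AF) (S : {set T}) : bool :=
  [&& admissible F S, S != set0 &
      [forall S' : {set T}, ((S' \proper S) && (S' != set0)) ==> ~~ admissible F S']].
Definition IS (F : AF) : {set {set T}} := [set S | initial F S].
Definition IS_u (F : AF) : {set {set T}} :=
  [set S in IS F | sminus F S == set0].
Definition IS_uc (F : AF) : {set {set T}} :=
  [set S in IS F | (sminus F S != set0) && ~~ [exists S' in IS F, set_attacks F S' S]].
Definition IS_c (F : AF) : {set {set T}} :=
  [set S in IS F | [exists S' in IS F, set_attacks F S' S]].

Definition reduct (F : AF) (S : {set T}) : AF :=
  let A' := args F :\: (S :|: splus F S) in
  (A', [set p in att F | (p.1 \in A') && (p.2 \in A')]).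

Definition selection := {set {set T}} -> {set {set T}} -> {set {set T}} -> {set {set T}}.
Definition termination := AF -> {set T} -> bool.

Definition step (alpha : selection) (st st' : AF * {set T}) : Prop :=
  exists S', S' \in alpha (IS_u st.1) (IS_uc st.1) (IS_c st.1) /\
             st' = (reduct st.1 S', st.2 :|: S').

Inductive reach (alpha : selection) : AF * {set T} -> AF * {set T} -> Prop :=
| reach_refl st : reach alpha st st
| reach_step st st' st'' : step alpha st st' -> reach alpha st' st'' -> reach alpha st st''.

Definition extensions (alpha : selection) (beta : termination) (F : AF) (S : {set T}) : Prop :=
  exists F', reach alpha (F, set0) (F', S) /\ beta F' S = true.

Definition serialisable (sigma : AF -> {set T} -> bool)
  (alpha : selection) (beta : termination) : Prop :=
  forall F : AF, wf_AF F -> forall S : {set T}, sigma F S = true <-> extensions alpha beta F S.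

Definition alpha_adm : selection := fun X Y Z => X :|: Y :|: Z.
Definition beta_adm : termination := fun _ _ => true.
End AFDefs.

(* Main.v *)
Require Import Defs.
From mathcomp Require Import all_boot.

Set Implicit Arguments. Unset Strict Implicit. Unset Printing Implicit Defensive.

Section Proofs.
Variable T : finType.
Implicit Types (F G : AF T) (S X I : {set T}).

Lemma admP F S : reflect
  [/\ S \subset args F,
      (forall a b, a \in S -> b \in S -> (a,b) \notin att F) &
      (forall b a, b \in S -> (a,b) \in att F -> exists2 c, c \in S & (c,a) \in att F)]
  (admissible F S).
Proof.
apply: (iffP and3P) => [[H1 /forallP H2 /forallP H3]|[H1 H2 H3]]; split => //.
- move=> a b aS bS. by move: (H2 a); rewrite aS /= => /forallP /(_ b); rewrite bS.
- move=> b a bS ab. move: (H3 b); rewrite bS /= => /forallP /(_ a) /implyP /(_ ab).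
  by case/existsP => c /andP [cS ca]; exists c.
- apply/forallP => a; apply/implyP => aS; apply/forallP => b; apply/implyP => bS.
  exact: H2.
- apply/forallP => b; apply/implyP => bS; apply/forallP => a; apply/implyP => ab.
  by case: (H3 b a bS ab) => c cS ca; apply/existsP; exists c; rewrite cS.
Qed.

Lemma splusP F S a : reflect (exists2 b, b \in S & (b,a) \in att F) (a \in splus F S).
Proof.
rewrite in_set; apply: (iffP existsP) => [[b /andP [? ?]]|[b ? ?]]; exists b => //.
by apply/andP.
Qed.

Lemma args_red F S x : (x \in args (reduct F S)) = [&& x \in args F, x \notin S & x \notin splus F S].
Proof. rewrite /args /= !inE negb_or. by case: (x \in S) => //=; rewrite andbC. Qed.

Lemma att_red F S p : (p \in att (reduct F S)) =
   [&& p \in att F, p.1 \in args (reduct F S) & p.2 \in args (reduct F S)].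
Proof. by rewrite /att /= inE. Qed.

Lemma wf_red F S : wf_AF (reduct F S).
Proof.
apply/subsetP => -[a b]; rewrite att_red => /and3P [_ ha hb].
by rewrite inE /= ha hb.
Qed.

Lemma initial_adm F S : initial F S -> admissible F S.
Proof. by case/and3P. Qed.

Lemma union_adm F S S' : wf_AF F -> admissible F S ->
  admissible (reduct F S) S' -> admissible F (S :|: S').
Proof.
move=> wf /admP [s1 s2 s3] /admP [t1 t2 t3].
have hS' x : x \in S' -> [&& x \in args F, x \notin S & x \notin splus F S].
  by move=> xS; rewrite -args_red (subsetP t1).
apply/admP; split.
- apply/subsetP => x; rewrite inE => /orP [/(subsetP s1)//|/hS' /and3P[]//].
- move=> a b; rewrite !inE => /orP [aS|aS'] /orP [bS|bS'].
  + exact: s2.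
  + apply/negP => ab; have /and3P [_ _ /negP []] := hS' _ bS'; apply/splusP; by exists a.
  + apply/negP => ab; have [c cS ca] := s3 _ _ bS ab.
    have /and3P [_ _ /negP []] := hS' _ aS'; apply/splusP; by exists c.
  + apply/negP => ab; have := t2 _ _ aS' bS'.
    by rewrite att_red ab /= args_red hS' // args_red hS'.
- move=> b a; rewrite inE => /orP [bS|bS'] ab.
  + by have [c cS ca] := s3 _ _ bS ab; exists c; rewrite // inE cS.
  + have aA : a \in args F by have := subsetP wf _ ab; rewrite inE => /andP [].
    case: (boolP (a \in splus F S)) => [/splusP [c cS ca]|naS].
      by exists c; rewrite // inE cS.
    case: (boolP (a \in S)) => [aS|naS2].
      have /and3P [_ _ /negP []] := hS' _ bS'; apply/splusP; by exists a.
    have aG : a \in args (reduct F S) by rewrite args_red aA naS2 naS.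
    have abG : (a, b) \in att (reduct F S) by rewrite att_red ab /= aG args_red hS'.
    have [c cS' ca] := t3 _ _ bS' abG.
    by exists c; rewrite ?inE ?cS' ?orbT //; move: ca; rewrite att_red => /andP[].
Qed.

Lemma reduct_comp F S S' : S' \subset args (reduct F S) ->
  reduct (reduct F S) S' = reduct F (S :|: S').
Proof.
move=> sub.
have eargs : args (reduct (reduct F S) S') = args (reduct F (S :|: S')).
  apply/setP => x; rewrite !args_red [x \in S :|: S']inE negb_or.
  case xA: (x \in args F) => //=; case xS: (x \in S) => //=.
  case xS': (x \in S') => //=; rewrite ?andbF //=.
  have -> : (x \in splus F (S :|: S')) = (x \in splus F S) || (x \in splus F S').
    apply/splusP/orP => [[b]|[]].
      by rewrite inE => /orP [] bS ba; [left|right]; apply/splusP; exists b.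
    by case/splusP => b bS ba; exists b; rewrite // inE bS.
    by case/splusP => b bS ba; exists b; rewrite // inE bS orbT.
  case xp: (x \in splus F S) => //=.
  have xG : x \in args (reduct F S) by rewrite args_red xA xS xp.
  congr negb; apply/splusP/splusP => [[b bS ba]|[b bS ba]]; exists b => //.
    by move: ba; rewrite att_red => /andP [].
  by rewrite att_red ba /= xG (subsetP sub).
have eatt : att (reduct (reduct F S) S') = att (reduct F (S :|: S')).
  apply/setP => -[a b]; rewrite !att_red -eargs /=.
  case ha: (a \in args (reduct (reduct F S) S')); rewrite ?andbF //=.
  case hb: (b \in args (reduct (reduct F S) S')); rewrite ?andbF //=.
  move: ha hb; rewrite args_red => /andP [-> _]; rewrite args_red => /andP [-> _].
  by rewrite !andbT.
move: eargs eatt; rewrite /args /att.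
case: (reduct (reduct F S) S') => ? ?; case: (reduct F (S :|: S')) => ? ? /= -> -> //.
Qed.


Lemma reduct0 F : wf_AF F -> reduct F set0 = F.
Proof.
move=> wf.
have ea : args (reduct F set0) = args F.
  apply/setP => x; rewrite args_red inE.
  case: (boolP (x \in splus F set0)) => [/splusP [b]|]; first by rewrite inE.
  by rewrite andbT.
have et : att (reduct F set0) = att F.
  apply/setP => -[a b]; rewrite att_red ea /=.
  case: (boolP ((a, b) \in att F)) => //= ab.
  by have := subsetP wf _ ab; rewrite inE.
move: ea et; rewrite /args /att; case: (reduct F set0) => ? ?; case: F wf => ? ? _ /= -> -> //.
Qed.

Lemma adm0 F : admissible F set0.
Proof. by apply/admP; split => // [|a b|b a]; rewrite ?sub0set ?inE. Qed.

Lemma reach_inv F st st' : reach (@alpha_adm T) st st' -> wf_AF F ->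
  st.1 = reduct F st.2 -> admissible F st.2 ->
  st'.1 = reduct F st'.2 /\ admissible F st'.2.
Proof.
elim => // [[G S] [G' S''] st'' [S' [hS' [-> ->]]] _ IH] wf /= eG adm.
have iS' : initial G S'.
  by move: hS'; rewrite /alpha_adm !inE => /orP [/orP [] | ] /andP [h _].
have aS' := initial_adm iS'.
apply: IH => //=.
  rewrite eG reduct_comp //; move: aS'; rewrite eG; by case/and3P.
by apply: union_adm => //; rewrite -eG.
Qed.

Lemma diff_adm G X I : admissible G X -> I \subset X ->
  admissible (reduct G I) (X :\: I).
Proof.
move=> /admP [s1 s2 s3] sIX.
have hin x : x \in X :\: I -> x \in args (reduct G I).
  rewrite inE => /andP [xI xX]; rewrite args_red (subsetP s1) //= xI /=.
  apply/negP => /splusP [b bI bx]; by have := s2 _ _ (subsetP sIX _ bI) xX; rewrite bx.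
apply/admP; split.
- by apply/subsetP.
- move=> a b aX bX; rewrite att_red negb_and; apply/orP; left.
  by apply: s2; [move: aX|move: bX]; rewrite inE => /andP [].
- move=> b a bX; rewrite att_red => /and3P [ab aG _].
  have bX' : b \in X by move: bX; rewrite inE => /andP [].
  have [c cX ca] := s3 _ _ bX' ab.
  have cXI : c \in X :\: I.
    rewrite inE cX andbT; apply/negP => cI.
    move: aG; rewrite args_red => /and3P [_ _ /negP []]; apply/splusP; by exists c.
  by exists c => //; rewrite att_red ca /= aG (hin _ cXI).
Qed.

Lemma exists_initial G X : admissible G X -> X != set0 ->
  exists2 I, initial G I & I \subset X.
Proof.
move=> aX nX.
pose P (Y : {set T}) := [&& Y \subset X, Y != set0 & admissible G Y].
have PX : P X by rewrite /P subxx nX aX.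
case: (arg_minnP (fun Y : {set T} => #|Y|) PX) => I /and3P [IX In Ia] Imin.
exists I => //; rewrite /initial Ia In /=.
apply/forallP => Y; apply/implyP => /andP [pY nY]; apply/negP => aY.
have := Imin Y; rewrite /P (subset_trans (proper_sub pY) IX) nY aY => /(_ isT).
by rewrite leqNgt proper_card.
Qed.

Lemma initial_alpha G I : initial G I -> I \in alpha_adm (IS_u G) (IS_uc G) (IS_c G).
Proof.
move=> iI; rewrite /alpha_adm !inE iI /=.
case: (sminus G I == set0) => //=.
by case: [exists S' in IS G, set_attacks G S' I].
Qed.

Lemma reach_adm n G S0 X : #|X| <= n -> wf_AF G -> admissible G X ->
  exists G', reach (@alpha_adm T) (G, S0) (G', S0 :|: X).
Proof.
elim: n G S0 X => [|n IH] G S0 X hc wf aX.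
  move: hc; rewrite leqn0 cards_eq0 => /eqP ->; rewrite setU0; exists G; constructor.
case: (eqVneq X set0) => [->|nX]; first by rewrite setU0; exists G; constructor.
have [I iI IX] := exists_initial aX nX.
have aD := diff_adm aX IX.
have hc' : #|X :\: I| <= n.
  have : #|X :\: I| < #|X|.
    apply: proper_card; rewrite properE subsetDl /=.
    move: iI => /and3P [_ /set0Pn [x xI] _].
    apply/negP => /subsetP /(_ x (subsetP IX _ xI)); by rewrite inE xI.
  move=> h; by rewrite -ltnS (leq_trans h hc).
have [G' r] := IH _ (S0 :|: I) _ hc' (wf_red G I) aD.
have eS : S0 :|: I :|: X :\: I = S0 :|: X.
  apply/setP => x; rewrite !inE.
  case xI: (x \in I); rewrite ?orbT /= ?(subsetP IX _ xI) ?orbT //.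
  by rewrite orbF.
exists G'; rewrite -eS.
apply: reach_step r; exists I; split => //; exact: initial_alpha.
Qed.

End Proofs.

Theorem theorem2 (T : finType) :
  serialisable (@admissible T) (@alpha_adm T) (@beta_adm T).
Proof.
move=> F wf S; split.
- move=> aS; have [G' r] := reach_adm set0 (leqnn #|S|) wf aS.
  by exists G'; rewrite set0U in r; split.
- case=> F' [r _].
  have [_ //] := reach_inv r wf (esym (reduct0 wf)) (adm0 F).
Qed.
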